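(* Let $(K,\mathrm{val})$ be a valued field whose residue class field $F$ has characteristic two, and assume every strict unit admits a square root in $K$. Let $A$ be a subring with $B\subseteq A\subseteq K$ and let $\mathcal M$ be a nonzero proper quasi-quadratic module of $A$. Then $S=\mathrm{val}(\mathcal M\setminus\{0\})$ is a well-behaved subset of $\mathrm{val}(A\setminus\{0\})$, and exactly one of the following holds: (1) $S$ has no smallest element, and $\mathcal M=\Gamma_1(S)$; (2) $A=B$, $S$ has a smallest element $g_{\min}$, and $\mathcal M=\Gamma_2(S,M_{g_{\min}}(\mathcal M))$.
   Context: Let $(G,\le)$ be a totally ordered abelian group written multiplicatively with identity $e$, $G^2=\{g^2:g\in G\}$. Let $(K,\mathrm{val})$ be a valued field with surjective valuation $\mathrm{val}:K\to G\cup\{\infty\}$, valuation ring $B=\{x:\mathrm{val}(x)\ge e\}$, residue map $\pi:B\to F$, residue field $F$. A strict unit is $x\in B^\times$ with $\pi(x)=1$. For $g\in G$, $\overline g$ denotes its class in $G/G^2$. A quasi-quadratic module in a commutative ring $R$ is a subset $M$ with $M+M\subseteq M$ and $a^2M\subseteq M$ for all $a\in R$. A pseudo-angular component map is a map $\mathrm{p.an}:K^\times\to F^\times$ such that: (1) $\mathrm{p.an}(u)=\pi(u)$ for $u\in B^\times$; (2) $\mathrm{p.an}(ux)=\pi(u)\mathrm{p.an}(x)$ for $u\in B^\times,x\in K^\times$; (3) for all $g\in G$, $c\in F^\times$ there is $w\in K$ with $\mathrm{val}(w)=g$, $\mathrm{p.an}(w)=c$; (4) for nonzero $x_1,x_2$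 with $x_1+x_2\ne0$: if $\mathrm{val}(x_1)<\mathrm{val}(x_2)$ then $\mathrm{p.an}(x_1+x_2)=\mathrm{p.an}(x_1)$; if $\mathrm{val}(x_1)=\mathrm{val}(x_2)$ and $\mathrm{p.an}(x_1)+\mathrm{p.an}(x_2)\ne0$ then $\mathrm{val}(x_1+x_2)=\mathrm{val}(x_1)$ and $\mathrm{p.an}(x_1+x_2)=\mathrm{p.an}(x_1)+\mathrm{p.an}(x_2)$; (5) if $x,y\in K^\times$, $\overline{\mathrm{val}(x)}=\overline{\mathrm{val}(y)}$ and $\mathrm{p.an}(x)=\mathrm{p.an}(y)$ then $y=u^2x$ for some $u\in K^\times$; (6) for $a,u\in K^\times$ there is $k\in F^\times$ with $\mathrm{p.an}(au^2)=\mathrm{p.an}(a)k^2$. Such a map exists when strict units are squares; fix one. A subset $S\subseteq\mathrm{val}(A\setminus\{0\})$ is well-behaved if (i) $h\le g$ for all $g\in S$ and $h\in\mathrm{val}(A^\times)$, and (ii) $gh\in S$ for all $g\in S$ and $h\in\mathrm{val}(A\setminus\{0\})$. For well-behaved $S$: $\Gamma_1(S)=\{x\in A\setminus\{0\}:\mathrm{val}(x)\in S\}\cup\{0\}$; if $S$ has a smallest element $g_{\min}$ and $M$ is a quasi-quadratic module of $F$: $\Gamma_2(S,M)=\{x\in A:\ (\mathrm{val}(x)=g_{\min}\text{ and }\mathrm{p.an}(x)\in M)\text{ or }\mathrm{val}(x)>g_{\min}\}$ (containing $0$ since $\mathrm{val}(0)=\infty$). For $g\in G$: $M_g(\mathcal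 M)=\{\mathrm{p.an}(x):x\in\mathcal M\setminus\{0\},\ \mathrm{val}(x)=g\}\cup\{0\}$. *)

(* Defs.v *)
From HB Require Import structures.
From mathcomp Require Import all_boot all_order all_algebra.
Set Implicit Arguments. Unset Strict Implicit. Unset Printing Implicit Defensive.
Import Order.TTheory GRing.Theory Num.Theory.
Local Open Scope ring_scope.

Record OAG := {
  oag_car :> Type;
  omul : oag_car -> oag_car -> oag_car;
  oone : oag_car;
  oinv : oag_car -> oag_car;
  ole : oag_car -> oag_car -> Prop;
  omulA : forall a b c, omul a (omul b c) = omul (omul a b) c;
  omulC : forall a b, omul a b = omul b a;
  omul1 : forall a, omul oone a = a;
  omulV : forall a, omul (oinv a) a = oone;
  ole_refl : forall a, ole a a;
  ole_trans : forall a b c, ole a b -> ole b c -> ole a c;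
  ole_anti : forall a b, ole a b -> ole b a -> a = b;
  ole_total : forall a b, ole a b \/ ole b a;
  ole_mul : forall a b c, ole a b -> ole (omul a c) (omul b c)
}.

Section Defs.
Variable G : OAG.

Definition olt (a b : G) : Prop := ole a b /\ a <> b.

(* G ∪ {∞}, with None = ∞ *)
Definition vle (a b : option G) : Prop :=
  match a, b with
  | _, None => True
  | None, Some _ => False
  | Some x, Some y => ole x y
  end.
Definition vlt (a b : option G) : Prop := vle a b /\ a <> b.
Definition vmul (a b : option G) : option G :=
  match a, b with
  | Some x, Some y => Some (omul x y)
  | _, _ => None
  end.

(* same class in G / G^2 *)
Definition sqclass_eq (g h : G) : Prop := exists k : G, g = omul h (omul k k).

Variables (K F : fieldType) (val : K -> option G) (pi : K -> F).

Definition is_valuation : Prop :=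
  [/\ forall x, val x = None <-> x = 0,
      forall x y, val (x * y) = vmul (val x) (val y),
      forall x y g, vle (Some g) (val x) -> vle (Some g) (val y) ->
                    vle (Some g) (val (x + y))
    & forall g : G, exists x, val x = Some g].

Definition valB (x : K) : Prop := vle (Some (oone G)) (val x).
Definition unitB (x : K) : Prop := val x = Some (oone G).

(* pi restricted to B is the residue map B -> F = B / m (surjective ring
   morphism with kernel the maximal ideal m = {val > e}). *)
Definition is_residue_map : Prop :=
  [/\ forall x y, valB x -> valB y -> pi (x + y) = pi x + pi y,
      forall x y, valB x -> valB y -> pi (x * y) = pi x * pi y,
      pi 1 = 1,
      forall c, exists2 x, valB x & pi x = c
    & forall x, valB x -> (pi x = 0 <-> vlt (Some (oone G)) (val x))].

Definition strict_unit (x : K) : Prop := unitB x /\ pi x = 1.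

(* pseudo-angular component map K^x -> F^x (values at 0 irrelevant) *)
Definition is_pan (pan : K -> F) : Prop :=
  (forall x, x != 0 -> pan x != 0) /\
  [/\ forall u, unitB u -> pan u = pi u,
      forall u x, unitB u -> x != 0 -> pan (u * x) = pi u * pan x,
      forall (g : G) (c : F), c != 0 -> exists w, val w = Some g /\ pan w = c,
      (forall x1 x2, x1 != 0 -> x2 != 0 -> x1 + x2 != 0 ->
         (vlt (val x1) (val x2) -> pan (x1 + x2) = pan x1) /\
         (val x1 = val x2 -> pan x1 + pan x2 != 0 ->
            val (x1 + x2) = val x1 /\ pan (x1 + x2) = pan x1 + pan x2)) /\
      (forall x y gx gy, val x = Some gx -> val y = Some gy ->
         sqclass_eq gx gy -> pan x = pan y -> exists2 u, u != 0 & y = u ^+ 2 * x)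
    & forall a u, a != 0 -> u != 0 ->
         exists2 k, k != 0 & pan (a * u ^+ 2) = pan a * k ^+ 2].

Variable A : K -> Prop.

Definition is_subring : Prop :=
  A 1 /\ forall x y, A x -> A y -> A (x - y) /\ A (x * y).

Definition unitA (x : K) : Prop := A x /\ x != 0 /\ A x^-1.

Definition is_qqm (M : K -> Prop) : Prop :=
  [/\ forall x, M x -> A x,
      forall x y, M x -> M y -> M (x + y)
    & forall a x, A a -> M x -> M (a ^+ 2 * x)].

Definition is_qqmF (M : F -> Prop) : Prop :=
  (forall x y, M x -> M y -> M (x + y)) /\ (forall a x, M x -> M (a ^+ 2 * x)).

Definition valset (M : K -> Prop) (g : G) : Prop :=
  exists x, [/\ M x, x != 0 & val x = Some g].

Definition well_behaved (S : G -> Prop) : Prop :=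
  [/\ forall g, S g -> valset A g,
      forall g h, S g -> (exists2 x, unitA x & val x = Some h) -> ole h g
    & forall g h, S g -> valset A h -> S (omul g h)].

Definition is_smallest (S : G -> Prop) (g : G) : Prop :=
  S g /\ forall h, S h -> ole g h.

Definition Gamma1 (S : G -> Prop) (x : K) : Prop :=
  (A x /\ x != 0 /\ exists2 g, val x = Some g & S g) \/ x = 0.

Definition Gamma2 (pan : K -> F) (gmin : G) (N : F -> Prop) (x : K) : Prop :=
  A x /\ ((val x = Some gmin /\ N (pan x)) \/ vlt (Some gmin) (val x)).

Definition Mg (pan : K -> F) (M : K -> Prop) (g : G) (c : F) : Prop :=
  (exists x, [/\ M x, x != 0, val x = Some g & pan x = c]) \/ c = 0.

End Defs.

(* Main.v *)
Require Import Defs.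
From HB Require Import structures.
From mathcomp Require Import all_boot all_order all_algebra.
From Stdlib Require Import Classical.
Import GRing.Theory.
Local Open Scope ring_scope.

Section GroupLemmas.
Context {G : OAG}.
Local Notation e := (oone G).

Lemma omul1r (a : G) : omul a e = a.
Proof. by rewrite omulC omul1. Qed.

Lemma ocancel (a b c : G) : omul a c = omul b c -> a = b.
Proof.
move=> H; have := f_equal (fun t => omul t (oinv c)) H.
by rewrite -!omulA (omulC c (oinv c)) omulV !omul1r.
Qed.

Lemma osq1 (g : G) : omul g g = e -> g = e.
Proof.
move=> H; case: (ole_total g e) => Hg.
- have h1 : ole (omul g g) (omul e g) by apply: ole_mul.
  rewrite H omul1 in h1; exact: ole_anti.
- have h1 : ole (omul e g) (omul g g) by apply: ole_mul.
  rewrite H omul1 in h1; exact: ole_anti.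
Qed.

Lemma olt_mul (a b c : G) : ole a b -> a <> b -> ole (omul a c) (omul b c) /\ omul a c <> omul b c.
Proof. move=> H1 H2; split; first exact: ole_mul. by move=> /ocancel. Qed.

Lemma ole_mul_l (a b c : G) : ole a b -> ole (omul c a) (omul c b).
Proof. by move=> H; rewrite !(omulC c); apply: ole_mul. Qed.

Lemma olt_neq_le (a b : G) : ~ ole a b -> ole b a /\ b <> a.
Proof.
move=> H; case: (ole_total a b) => // H'; split => // E; apply: H; rewrite E; exact: ole_refl.
Qed.
End GroupLemmas.

Section Main.
Variables (G : OAG) (K F : fieldType) (val : K -> option G)
  (pi : K -> F) (pan : K -> F) (A M : K -> Prop).
Hypotheses (Hv : is_valuation val) (Hpi : is_residue_map val pi)
  (H2 : 2 \in [pchar F])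
  (Hsq : forall x, strict_unit val pi x -> exists y : K, x = y * y)
  (HA : is_subring A) (HBA : forall x, valB val x -> A x) (HM : is_qqm A M).
Local Notation e := (oone G).

Lemma val0 : val 0 = None.
Proof. by case: Hv => H _ _ _; apply/H. Qed.

Lemma valS {x} : x != 0 -> exists g, val x = Some g.
Proof.
case: Hv => H _ _ _ nx; case E: (val x) => [g|]; first by exists g.
by move/H: E => E; rewrite E eqxx in nx.
Qed.

Lemma valM x y : val (x * y) = vmul (val x) (val y).
Proof. by case: Hv. Qed.

Lemma val1 : val 1 = Some e.
Proof.
have [g Hg] := @valS 1 (oner_neq0 K).
have := valM 1 1; rewrite mulr1 Hg /= => [[E]].
congr Some; apply: (@ocancel G _ _ g); by rewrite omul1 -E.
Qed.

Lemma sq_unit y : val (y * y) = Some e -> val y = Some e.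
Proof.
rewrite valM; case E: (val y) => [g|] //= [H]; by rewrite (@osq1 G g H).
Qed.

Lemma valN1 : val (-1) = Some e.
Proof. apply: sq_unit; by rewrite mulrNN mulr1 val1. Qed.

Lemma A0 : A 0.
Proof. case: HA => H1 H; by have [h _] := H 1 1 H1 H1; rewrite subrr in h. Qed.

Lemma M0 x : M x -> M 0.
Proof. case: HM => _ _ H Mx; by have := H 0 x A0 Mx; rewrite expr0n /= mul0r. Qed.

Lemma pi0 : pi 0 = 0.
Proof.
case: Hpi => Hadd _ _ _ _; have hB0 : valB val 0 by rewrite /valB val0.
have := Hadd 0 0 hB0 hB0; rewrite addr0 => h.
have h' : pi 0 + 0 = pi 0 + pi 0 by rewrite addr0.
by rewrite (addrI _ h').
Qed.

Lemma valB1 : valB val 1.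
Proof. rewrite /valB val1 /=; exact: ole_refl. Qed.

Lemma char2 : (1 : F) + 1 = 0.
Proof. by have := GRing.pcharf0 H2; rewrite -[2%N]/(1+1)%N natrD. Qed.

Lemma piN1 : pi (-1) = 1.
Proof.
case: Hpi => Hadd _ Hp1 _ _.
have hB : valB val (-1) by rewrite /valB valN1 /=; exact: ole_refl.
have := Hadd 1 (-1) valB1 hB; rewrite subrr pi0 Hp1 => h.
have : pi (-1) = (1 + pi (-1)) + 1 by rewrite addrC addrA char2 add0r.
by rewrite -h add0r.
Qed.

Lemma sq_root_A t : strict_unit val pi t -> exists2 y, A y & t = y ^+ 2.
Proof.
move=> Ht; have [y Hy] := Hsq _ Ht; exists y; last by rewrite expr2.
apply: HBA; rewrite /valB (@sq_unit y) /=; first exact: ole_refl.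
by rewrite -Hy; case: Ht.
Qed.

Lemma key c m : vlt (Some e) (val c) -> M m -> M (c * m).
Proof.
move=> [Hle Hne] Mm.
case: Hpi => Hadd Hmul Hp1 _ Hker.
case: HM => _ HMadd HMsq.
have Hpc : pi c = 0 by apply/(Hker c Hle).
have hB : valB val (1 + c).
  by case: Hv => _ _ Hu _; apply: Hu => //; rewrite val1; exact: ole_refl.
have hp : pi (1 + c) = 1 by rewrite Hadd // ?Hpc ?addr0 //; exact: valB1.
have hu : strict_unit val pi (1 + c).
  split => //; rewrite /unitB.
  have := hB; rewrite /valB; case E: (val (1 + c)) => [k|] /= hk.
  - case: (classic (e = k)) => [-> // | hek].
    have : pi (1 + c) = 0.
      apply (proj2 (Hker _ hB)); rewrite E; split => // [[h]]; exact: hek h.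
    by rewrite hp => /eqP; rewrite oner_eq0.
  - have : 1 + c = 0 by case: Hv => H _ _ _; apply/H.
    by move=> h; move: hp; rewrite h pi0 => /eqP; rewrite eq_sym oner_eq0.
have [y Ay Hy] := sq_root_A _ hu.
have hu' : strict_unit val pi (-1) by split; [exact: valN1 | exact: piN1].
have [z Az Hz] := sq_root_A _ hu'.
have := HMadd _ _ (HMsq _ _ Ay Mm) (HMsq _ _ Az Mm).
by rewrite -Hy -Hz mulN1r mulrDl mul1r addrAC subrr add0r.
Qed.

Lemma key2 {m g z} : M m -> m != 0 -> val m = Some g -> vlt (Some g) (val z) -> M z.
Proof.
move=> Mm m0 vm Hz.
case: (eqVneq z 0) => [-> | z0]; first exact: (M0 m Mm).
have [k vz] := valS z0; rewrite vz in Hz; case: Hz => /= Hle Hne.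
have -> : z = (z / m) * m by rewrite divfK.
apply: key => //.
have vi : val m^-1 = Some (oinv g).
  have := valM m m^-1; rewrite mulfV // val1 vm.
  case: (val m^-1) => [h|] //= [E]; congr Some.
  apply: (@ocancel G _ _ g); by rewrite omulV omulC -E.
rewrite valM vz vi /=.
have [h1 h2] := @olt_mul G g k (oinv g) Hle (fun E => Hne (congr1 Some E)).
rewrite (omulC g) omulV in h1 h2; split => //= [[E]]; exact: h2.
Qed.

Lemma valMS {x y gx gy} : val x = Some gx -> val y = Some gy -> val (x * y) = Some (omul gx gy).
Proof. by move=> hx hy; rewrite valM hx hy. Qed.

Lemma valV {x g} : x != 0 -> val x = Some g -> val x^-1 = Some (oinv g).
Proof.
move=> x0 vm.
have := valM x x^-1; rewrite mulfV // val1 vm.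
case: (val x^-1) => [h|] //= [E]; congr Some.
apply: (@ocancel G _ _ g); by rewrite omulV omulC -E.
Qed.

Lemma omulinvK (h k : G) : omul h (omul k (oinv h)) = k.
Proof. by rewrite omulA (omulC h k) -omulA (omulC h (oinv h)) omulV omul1r. Qed.

Lemma wb3 {g h} : valset val M g -> valset val A h -> valset val M (omul g h).
Proof.
move=> [m [Mm m0 vm]] [a [Aa a0 va]].
case: HM => _ _ HMsq.
have am0 : a * m != 0 by rewrite mulf_neq0.
have vam : val (a * m) = Some (omul g h) by rewrite (valMS va vm) omulC.
case: (classic (e = h)) => [<- | ne]; first by rewrite omul1r; exists m.
case: (ole_total e h) => Hh.
- exists (a * m); split => //.
  apply: (key2 Mm m0 vm); rewrite vam.
  have [h1 h2] := @olt_mul G e h g Hh ne.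
  rewrite omul1 (omulC h) in h1 h2; split => // [[E]]; exact: h2.
- have ne' : h <> e by move=> E; apply: ne.
  have a2m0 : a ^+ 2 * m != 0 by rewrite mulf_neq0 // expf_neq0.
  have va2m : val (a ^+ 2 * m) = Some (omul h (omul g h)).
    by rewrite expr2 -mulrA (valMS va vam).
  exists (a * m); split => //.
  apply: (key2 (HMsq _ _ Aa Mm) a2m0 va2m); rewrite vam.
  have [h1 h2] := @olt_mul G h e (omul g h) Hh ne'.
  rewrite omul1 in h1 h2; split => // [[E]]; exact: h2.
Qed.

Lemma wb2 (Hprop : exists x, A x /\ ~ M x) g h : valset val M g ->
  (exists2 x, unitA A x & val x = Some h) -> ole h g.
Proof.
move=> Sg [x [Ax [x0 Axi]] vx].
case: (classic (ole h g)) => // /olt_neq_le [Hgh Hne].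
exfalso; case: Hprop => y [Ay nMy]; apply: nMy.
case: (eqVneq y 0) => [-> | y0].
  by case: Sg => m [Mm _ _]; exact: (M0 m Mm).
have [k vy] := valS y0.
have vxi := valV x0 vx.
case: HA => _ Hsub.
have Aa : A (y * x^-1) by case: (Hsub _ _ Ay Axi).
have a0 : y * x^-1 != 0 by rewrite mulf_neq0 // invr_eq0.
have [m' [Mm' m'0 vm']] := wb3 Sg (ex_intro _ _ (And3 Aa a0 (valMS vy vxi))).
apply: (key2 Mm' m'0 vm'); rewrite vy.
have [h1 h2] := @olt_mul G g h (omul k (oinv h)) Hgh Hne.
rewrite omulinvK in h1 h2; split => // [[E]]; exact: h2.
Qed.
End Main.
Arguments wb2 {G K F val pi A M}.
Arguments wb3 {G K F val pi A M} Hv Hpi H2 Hsq HA HBA HM {g h}.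
Arguments key2 {G K F val pi A M} Hv Hpi H2 Hsq HA HBA HM {m g z}.
Arguments M0 {K A M}.
Arguments val0 {G K val}.
Arguments valS {G K val} Hv {x}.
Arguments valMS {G K val} Hv {x y gx gy}.

Theorem mainTheorem19 (G : OAG) (K F : fieldType) (val : K -> option G)
  (pi : K -> F) (pan : K -> F) (A M : K -> Prop) :
  is_valuation val ->
  is_residue_map val pi ->
  (2 \in [pchar F]) ->
  (forall x, strict_unit val pi x -> exists y : K, x = y * y) ->
  is_pan val pi pan ->
  is_subring A ->
  (forall x, valB val x -> A x) ->
  is_qqm A M ->
  (exists x, M x /\ x != 0) ->
  (exists x, A x /\ ~ M x) ->
  let S := valset val M in
  well_behaved val A S /\
  (let P1 := (~ exists g, is_smallest S g) /\ (forall x, M x <-> Gamma1 val A S x) in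
   let P2 := (forall x, A x <-> valB val x) /\
             exists gmin, is_smallest S gmin /\
               (forall x, M x <-> Gamma2 val A pan gmin (Mg val pan M gmin) x) in
   (P1 \/ P2) /\ ~ (P1 /\ P2)).
Proof.
move=> Hv Hpi H2 Hsq Hpan HA HBA HM Hm0 Hprop S.
have HMA : forall x, M x -> A x by case: HM.
have wb : well_behaved val A S.
  split.
  - by move=> g [x [Mx x0 vx]]; exists x; split => //; apply: HMA.
  - exact: (wb2 Hv Hpi H2 Hsq HA HBA HM Hprop).
  - move=> g h; exact: (wb3 Hv Hpi H2 Hsq HA HBA HM).
split => //.
move=> P1 P2.
have Hkey2 := key2 Hv Hpi H2 Hsq HA HBA HM.
have HM0 := M0 HA HM.
split; last by case=> [[n _] [_ [g [sg _]]]]; apply: n; exists g.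
case: (classic (exists g, is_smallest S g)) => [[gmin [Sg Hmin]] | nsm].
- right; split.
  + move=> x; split => [Ax | ]; last exact: HBA.
    rewrite /valB; case: (eqVneq x 0) => [-> | x0]; first by rewrite (val0 Hv).
    have [h vx] := valS Hv x0; rewrite vx /=.
    case: (classic (ole (oone G) h)) => // /olt_neq_le [Hh Hne].
    exfalso.
    have Sgh := wb3 Hv Hpi H2 Hsq HA HBA HM Sg (ex_intro _ x (And3 Ax x0 vx)).
    have := Hmin _ Sgh.
    have [h1 h2] := @olt_mul G h (oone G) gmin Hh Hne.
    rewrite omul1 (omulC h) in h1 h2 => h3; apply: h2; exact: ole_anti.
  + exists gmin; split => //.
    move=> x; split.
    * move=> Mx; split; first exact: HMA.
      case: (eqVneq x 0) => [-> | x0]; first by rewrite (val0 Hv); right.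
      have [g vx] := valS Hv x0; rewrite vx.
      have Sx : S g by exists x.
      case: (classic (gmin = g)) => [E | ne].
      - subst g; by left; split => //; left; exists x; split.
      - right; split; [exact: (Hmin g Sx) | by case].
    * case=> Ax [[vx HN] | Hlt]; last first.
        by case: Sg => m [Mm m0 vm]; exact: (Hkey2 _ _ _ Mm m0 vm Hlt).
      have x0 : x != 0 by apply/eqP => E; rewrite E (val0 Hv) in vx.
      case: HN => [[m [Mm m0 vm pm]] | p0]; last first.
        by case: Hpan => Hp _; have := Hp x x0; rewrite p0 eqxx.
      case: Hpan => _ [_ _ _ [_ H5] _].
      have sq : sqclass_eq gmin gmin by exists (oone G); rewrite omul1 omul1r.
      have [u u0 Hu] := H5 m x gmin gmin vm vx sq pm.
      have [k vu] := valS Hv u0.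
      have Au : A u.
        apply: HBA; rewrite /valB vu /=.
        have : val x = Some (omul (omul k k) gmin).
          by rewrite Hu expr2 (valMS Hv (valMS Hv vu vu) vm).
        rewrite vx => [[E]].
        have h : omul (omul k k) gmin = omul (oone G) gmin by rewrite omul1 -E.
        have h' := ocancel _ _ _ h; rewrite (osq1 _ h'); exact: ole_refl.
      by rewrite Hu; case: HM => _ _ Hsq2; apply: Hsq2.
- left; split => // x; split.
  + move=> Mx; case: (eqVneq x 0) => [-> | x0]; first by right.
    have [g vx] := valS Hv x0; left; split; first exact: HMA.
    by split => //; exists g => //; exists x.
  + case=> [[Ax [x0 [g vx Sg]]] | ->]; last first.
      by case: Hm0 => m [Mm _]; exact: (HM0 m Mm).
    case: (classic (exists h, S h /\ ~ ole g h)) => [[h [[m [Mm m0 vm]] nle]] | nex].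
    * apply: (Hkey2 _ _ _ Mm m0 vm); rewrite vx.
      have [hl hn] := olt_neq_le _ _ nle.
      by split => // [[E]]; apply: hn.
    * exfalso; apply: nsm; exists g; split => // h Sh.
      by case: (classic (ole g h)) => // nle; exfalso; apply: nex; exists h.
Qed.
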